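(* Let $G=\mathbb{Z}_2\times\mathbb{Z}_4$ and let $\theta$ be a normalised orthomorphism of $G$. Then $|A_{44}|=|A_{42}|=|A_{24}|=2$ and $|A_{22}|=1$.
   Context: $G$ is written multiplicatively with identity $e$; $o(g)$ is the order of $g$. A normalised orthomorphism of $G$ is a bijection $\theta\colon G\to G$ with $\theta(e)=e$ such that $x\mapsto x^{-1}\theta(x)$ is also a bijection of $G$. For such $\theta$: $A_{44}=\{x: o(x)=4, o(\theta(x))=4\}$, $A_{42}=\{x: o(x)=4, o(\theta(x))=2\}$, $A_{24}=\{x: o(x)=2, o(\theta(x))=4\}$, $A_{22}=\{x: o(x)=2, o(\theta(x))=2\}$. *)

(* Defs.v *)
From mathcomp Require Import all_boot all_fingroup all_algebra.
Set Implicit Arguments. Unset Strict Implicit. Unset Printing Implicit Defensive.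
Local Open Scope group_scope.

(* The group G = Z_2 x Z_4 as a finGroupType: the direct product of the
   (additive, written via the generic group notation) cyclic groups 'Z_2, 'Z_4. *)
Definition G24 : finGroupType := ('Z_2 * 'Z_4)%type.

Definition normalised_orthomorphism (gT : finGroupType) (theta : gT -> gT) : Prop :=
  [/\ bijective theta, theta 1 = 1 & bijective (fun x => x^-1 * theta x)].

Definition Aset (gT : finGroupType) (theta : gT -> gT) (i j : nat) : {set gT} :=
  [set x | (#[x] == i) && (#[theta x] == j)].

(* Main.v *)
Require Import Defs.
From mathcomp Require Import all_boot all_fingroup all_algebra.
From mathcomp Require Import zify cyclic.
Local Open Scope group_scope.

Definition mk (a b : nat) (Ha : a < 2) (Hb : b < 4) : G24 :=
  (@Ordinal 2 a Ha, @Ordinal 4 b Hb).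

Definition e : seq G24 :=
  [:: mk 0 0 isT isT; mk 0 1 isT isT; mk 0 2 isT isT; mk 0 3 isT isT;
      mk 1 0 isT isT; mk 1 1 isT isT; mk 1 2 isT isT; mk 1 3 isT isT].

Lemma e_uniq : uniq e.
Proof. exact (@Logic.eq_refl bool true <: uniq e = true). Qed.

Lemma mem_e (x : G24) : x \in e.
Proof.
case: x => [[a Ha] [b Hb]].
have E: forall a' b' (Ha' : a' < 2) (Hb' : b' < 4), a = a' -> b = b' ->
  (@Ordinal 2 a Ha, @Ordinal 4 b Hb) = mk a' b' Ha' Hb'.
  by move=> a' b' Ha' Hb' ea eb; subst; congr (_, _); apply: val_inj.
move: E; case: a Ha => [|[|a]] Ha E; last by [].
- move: E; case: b Hb => [|[|[|[|b]]]] Hb E; last by [].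
  + by rewrite (E 0%N 0%N isT isT).
  + by rewrite (E 0%N 1%N isT isT).
  + by rewrite (E 0%N 2%N isT isT).
  + by rewrite (E 0%N 3%N isT isT).
- move: E; case: b Hb => [|[|[|[|b]]]] Hb E; last by [].
  + by rewrite (E 1%N 0%N isT isT).
  + by rewrite (E 1%N 1%N isT isT).
  + by rewrite (E 1%N 2%N isT isT).
  + by rewrite (E 1%N 3%N isT isT).
Qed.

Definition ordf (x : G24) : nat :=
  if x == 1 then 1%N else if x ^+ 2 == 1 then 2%N else 4%N.

Lemma exp4 : all (fun x : G24 => x ^+ 4 == 1) e.
Proof. exact (@Logic.eq_refl bool true <: all (fun x : G24 => x ^+ 4 == 1) e = true). Qed.

Lemma ordfE (x : G24) : #[x] = ordf x.
Proof.
have x4 : x ^+ 4 == 1 by exact: (allP exp4 x (mem_e x)).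
have gt0 := order_gt0 x.
rewrite /ordf; case: eqP => [->|nx1]; first by rewrite order1.
have n1 : #[x] != 1%N by rewrite order_eq1; apply/eqP.
case: ifP => [x2|nx2].
  have d2 : (#[x] %| 2)%N by rewrite order_dvdn.
  have := @dvdn_leq _ 2 isT d2; move: n1; lia.
have d4 : (#[x] %| 4)%N by rewrite order_dvdn.
have nd2 : ~~ (#[x] %| 2)%N by rewrite order_dvdn nx2.
have := @dvdn_leq _ 4 isT d4; move: n1 d4 nd2 gt0.
case: #[x] => [|[|[|[|[|n]]]]] //.
Qed.

Definition cnt (z : seq (G24 * G24)) i j :=
  count (fun p => (ordf p.1 == i) && (ordf p.2 == j)) z.

Definition chk (s : seq G24) :=
  uniq [seq p.1^-1 * p.2 | p <- zip e s] ==>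
  [&& cnt (zip e s) 4 4 == 2, cnt (zip e s) 4 2 == 2,
      cnt (zip e s) 2 4 == 2 & cnt (zip e s) 2 2 == 1]%N.

Definition e' := behead e.
Lemma allchk : all (fun t => chk (1 :: t)) (permutations e').
Proof. exact (@Logic.eq_refl bool true <: all (fun t => chk (1 :: t)) (permutations e') = true). Qed.

Lemma zip_map_e (f : G24 -> G24) (t : seq G24) :
  zip t (map f t) = map (fun x => (x, f x)) t.
Proof. by elim: t => //= x t ->. Qed.

Lemma card_count (P : pred G24) : #|[set x | P x]| = count P e.
Proof.
rewrite cardsE cardE /enum_mem size_filter.
have pe : perm_eq (Finite.enum G24) e.
  apply: uniq_perm; last by move=> x; rewrite mem_e -enumT mem_enum.
    by rewrite -enumT enum_uniq.
  exact: e_uniq.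
rewrite (seq.permP pe); apply: eq_count => x /=; by [].
Qed.

Close Scope group_scope.

Theorem corollary1 (theta : G24 -> G24) :
  normalised_orthomorphism theta ->
  [/\ #|Aset theta 4 4| = 2, #|Aset theta 4 2| = 2,
      #|Aset theta 2 4| = 2 & #|Aset theta 2 2| = 1].
Proof.
case=> bt t1 bo.
set s := map theta e.
have e1 : e = 1%g :: e'.
  by rewrite /e' /e /=; congr (_ :: _); apply/eqP.
have es : s = 1%g :: map theta e' by rewrite /s e1 /= t1.
have pse : perm_eq s e.
  apply: uniq_perm.
  - rewrite map_inj_uniq; [exact: e_uniq | exact: bij_inj].
  - exact: e_uniq.
  by move=> x; rewrite mem_e; case: bt => g _ gK; rewrite -(gK x) map_f ?mem_e.
have ps : map theta e' \in permutations e'.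
  by rewrite mem_permutations -(perm_cons 1%g) -e1 -es.
have h1 : uniq [seq (p.1^-1 * p.2)%g | p <- zip e s].
  rewrite /s zip_map_e -map_comp map_inj_uniq; first exact: e_uniq.
  exact: bij_inj bo.
move: (allP allchk _ ps); rewrite -es /chk => /implyP /(_ h1).
rewrite /cnt /s zip_map_e !count_map /Aset !card_count.
have E : forall i j, count (preim (fun x => (x, theta x))
   (fun p => (ordf p.1 == i) && (ordf p.2 == j))) e =
   count (fun x => (#[x]%g == i) && (#[theta x]%g == j)) e.
  by move=> i j; apply: eq_count => x /=; rewrite !ordfE.
by rewrite !E => /and4P [/eqP -> /eqP -> /eqP -> /eqP ->].
Qed.
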